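(* Let $\alpha,\beta,\gamma,x\in\mathbb{N}_0$ with $(\alpha,\beta,\gamma,x)\neq(0,0,0,0)$, let $\lambda$ be a nonnegative integer and $n$ a nonnegative integer. Then $$A^{\lambda,x}_{n+1}(\alpha,\beta,\gamma)=\gamma\, A^{\lambda,x}_n(\alpha,\beta,\gamma+\alpha)+x\lambda\beta\sum_{k=0}^{n}\binom{n}{k}A^{1,x}_{k}(\alpha,\beta,\gamma+\beta+\alpha)\,A^{\lambda,x}_{n-k}(\alpha,\beta,0).$$
   Context: For a number $t$ and $\alpha$, the generalised factorial is $(t|\alpha)_n=\prod_{j=0}^{n-1}(t-j\alpha)$ for $n\ge 1$ and $(t|\alpha)_0=1$. For parameters $\alpha,\beta,\gamma$, the generalised Stirling numbers $S(n,k,\alpha,\beta,\gamma)$ ($0\le k\le n$) are defined by the polynomial identity $(t|\alpha)_n=\sum_{k=0}^{n}S(n,k,\alpha,\beta,\gamma)\,(t-\gamma|\beta)_k$ in the variable $t$. For a nonnegative integer $\lambda$ put $\binom{k+\lambda-1}{k}=\lambda(\lambda+1)\cdots(\lambda+k-1)/k!$ (equal to $1$ for $k=0$). Define $$A^{\lambda,x}_n(\alpha,\beta,\gamma)=\sum_{k=0}^{n}\binom{k+\lambda-1}{k}(-1)^{n+k}\beta^k k!\,S(n,k,\alpha,-\beta,-\gamma)\,x^k .$$ *)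

(* Defs.v *)
From HB Require Import structures.
From mathcomp Require Import all_boot all_order all_algebra.
Set Implicit Arguments. Unset Strict Implicit. Unset Printing Implicit Defensive.
Import Order.TTheory GRing.Theory Num.Theory.
Local Open Scope ring_scope.

Definition gfact (a : int) (n : nat) : {poly int} :=
  \prod_(j < n) ('X - (a *+ j)%:P).

Definition gfact_shift (c b : int) (k : nat) : {poly int} :=
  \prod_(j < k) ('X - (c + b *+ j)%:P).

(* S is a family of generalised Stirling numbers iff it satisfies the defining
   polynomial identity (t|a)_n = sum_{k=0}^n S(n,k,a,b,c) (t-c|b)_k for all
   n, a, b, c.  (The coefficients are uniquely determined, since (t-c|b)_k is
   monic of degree k.) *)
Definition is_gen_stirling (S : nat -> nat -> int -> int -> int -> int) : Prop :=
  forall (n : nat) (a b c : int),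
    gfact a n = \sum_(k < n.+1) S n k a b c *: gfact_shift c b k.

(* binom(k+lam-1, k) := lam (lam+1) ... (lam+k-1) / k!  (exact division) *)
Definition rbin (lam k : nat) : nat := (\prod_(i < k) (lam + i)) %/ k`!.

Definition Apoly (S : nat -> nat -> int -> int -> int -> int)
    (lam x n alpha beta gamma : nat) : int :=
  \sum_(k < n.+1)
     (rbin lam k)%:R * (-1) ^+ (n + k) * (beta%:R) ^+ k * (k`!)%:R
       * S n k alpha%:R (- beta%:R) (- gamma%:R) * (x%:R) ^+ k.

(* Main.v *)
Require Import Defs.
From HB Require Import structures.
From mathcomp Require Import all_boot all_order all_algebra.
From mathcomp Require Import ring zify.
Set Implicit Arguments. Unset Strict Implicit. Unset Printing Implicit Defensive.
Import Order.TTheory GRing.Theory Num.Theory.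
Local Open Scope ring_scope.

Section Gen.
Variable T : comPzRingType.
Definition Rf (al a : T) (n : nat) : T := \prod_(j < n) (a + al *+ j).

Lemma Rf0 al a : Rf al a 0 = 1.
Proof. by rewrite /Rf big_ord0. Qed.

Lemma RfSr al a n : Rf al a n.+1 = Rf al a n * (a + al *+ n).
Proof. by rewrite /Rf big_ord_recr. Qed.

Lemma RfSl al a n : Rf al a n.+1 = a * Rf al (a + al) n.
Proof.
rewrite /Rf big_ord_recl /= mulr0n addr0; congr (_ * _).
by apply: eq_bigr => j _; rewrite /bump /= add1n mulrS addrA.
Qed.

Lemma Rf_vdm al a b n :
  Rf al (a + b) n = \sum_(k < n.+1) 'C(n, k)%:R * (Rf al a k * Rf al b (n - k)).
Proof.
elim: n => [|n IH]; first by rewrite big_ord1 !Rf0 bin0 !mulr1.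
rewrite RfSr IH big_distrl /=.
have -> : \sum_(i < n.+1) 'C(n, i)%:R * (Rf al a i * Rf al b (n - i)) * (a + b + al *+ n)
  = \sum_(i < n.+1) 'C(n, i)%:R * (Rf al a i.+1 * Rf al b (n - i))
    + \sum_(i < n.+1) 'C(n, i)%:R * (Rf al a i * Rf al b (n - i).+1).
  rewrite -big_split /=; apply: eq_bigr => i _.
  have hi : (i <= n)%N by rewrite -ltnS.
  rewrite !RfSr -mulrDr -mulrA; congr (_ * _).
  have -> : al *+ n = al *+ i + al *+ (n - i) by rewrite -mulrnDr subnKC.
  ring.
rewrite [RHS]big_ord_recl /= bin0 subn0.
under [in RHS]eq_bigr => i _ do rewrite /bump /= add1n binS natrD subSS mulrDl.
rewrite big_split /= [RHS]addrA [RHS]addrC; congr (_ + _).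
rewrite [X in _ = _ + X]big_ord_recr /= bin_small // mul0r addr0.
rewrite [LHS]big_ord_recl /= bin0 subn0.
congr (_ + _); apply: eq_bigr => i _.
rewrite /bump /= add1n.
by rewrite subnSK.

Qed.
End Gen.
Section LLsec.
Variables (R : nzRingType) (f : {additive R -> rat}) (l : nat -> rat).
Definition LL (h : {poly R}) : rat := \sum_(i < size h) f h`_i * l i.

Lemma LL_bound (h : {poly R}) N : (size h <= N)%N -> LL h = \sum_(i < N) f h`_i * l i.
Proof.
move=> hN; rewrite /LL (big_ord_widen N (fun i => f h`_i * l i) hN) big_mkcond /=.
apply: eq_bigr => i _; case: ifP => // /negbT; rewrite -leqNgt => hi.
by rewrite nth_default // raddf0 mul0r.
Qed.

Lemma LL_is_zmod_morphism : zmod_morphism LL.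
Proof.
move=> x y; set N := maxn (size x) (size y).
have hx : (size x <= N)%N by rewrite leq_maxl.
have hy : (size y <= N)%N by rewrite leq_maxr.
have hxy : (size (x - y)%R <= N)%N by rewrite (leq_trans (size_polyD _ _)) ?size_polyN // geq_max hx hy.
rewrite (LL_bound hx) (LL_bound hy) (LL_bound hxy) -sumrB.
by apply: eq_bigr => i _; rewrite coefB raddfB mulrBl.
Qed.
HB.instance Definition _ := GRing.isZmodMorphism.Build {poly R} rat LL LL_is_zmod_morphism.

Lemma LLC c : LL c%:P = f c * l 0.
Proof.
rewrite (@LL_bound _ 1) ?size_polyC ?leq_b1 // big_ord1 coefC //.
Qed.
End LLsec.

Definition Lf (l : nat -> rat) := LL (idfun : {additive rat -> rat}) l.
Definition DL (l1 l : nat -> rat) := LL (LL (idfun : {additive rat -> rat}) l) l1.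

Lemma rmorph_Rf (T1 T2 : comPzRingType) (phi : {rmorphism T1 -> T2}) al a n :
  phi (Rf al a n) = Rf (phi al) (phi a) n.
Proof.
rewrite /Rf rmorph_prod; apply: eq_bigr => j _.
by rewrite rmorphD rmorphMn.
Qed.

Lemma LfE l (g : {poly rat}) : Lf l g = \sum_(i < size g) g`_i * l i.
Proof. by []. Qed.

Lemma Lf_bound l (g : {poly rat}) N : (size g <= N)%N -> Lf l g = \sum_(i < N) g`_i * l i.
Proof. exact: LL_bound. Qed.

Lemma LfZ l c (g : {poly rat}) : Lf l (c *: g) = c * Lf l g.
Proof.
rewrite (@Lf_bound _ _ (size g)) ?size_scale_leq // LfE mulr_sumr.
by apply: eq_bigr => i _; rewrite coefZ mulrA.
Qed.

Lemma LfCM l c (g : {poly rat}) : Lf l (c%:P * g) = c * Lf l g.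
Proof. by rewrite mul_polyC LfZ. Qed.

Definition ff (k : nat) : {poly rat} := Rf (-1) 'X k.

Lemma ffE k : ff k = \prod_(j < k) ('X - (j%:R)%:P).
Proof.
rewrite /ff /Rf; apply: eq_bigr => j _.
by rewrite mulNrn polyCMn polyC1.
Qed.

Lemma ff_monic k : ff k \is monic.
Proof. by rewrite ffE monic_prod_XsubC. Qed.

Lemma size_ff k : size (ff k) = k.+1.
Proof. by rewrite ffE size_prod_XsubC -(filter_predT (index_enum _)) deprecated_filter_index_enum -cardE card_ord. Qed.

Lemma ff_lead k : (ff k)`_k = 1.
Proof.
by have := ff_monic k; rewrite monicE /lead_coef size_ff /= => /eqP.
Qed.

Fixpoint mom (v : nat -> rat) (n : nat) : nat -> rat :=
  if n is n'.+1 then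
    (fun i => if i == n' then v n' - \sum_(j < n') (ff n')`_j * mom v n' j
              else mom v n' i)
  else (fun _ => 0).

Lemma mom_coh v n i : (i < n)%N -> mom v n i = mom v i.+1 i.
Proof.
elim: n => [//|n IH] hi.
have [->//|hne] := eqVneq i n.
have hin : (i < n)%N by rewrite ltn_neqAle hne -ltnS.
by rewrite -IH //= (negbTE hne).
Qed.

Lemma moments (v : nat -> rat) : exists l, forall m, Lf l (ff m) = v m.
Proof.
exists (fun i => mom v i.+1 i) => m.
rewrite LfE size_ff big_ord_recr ff_lead mul1r.
rewrite (eq_bigr (fun i : 'I_m => (ff m)`_i * mom v m i)); last first.
  by move=> i _; rewrite (mom_coh v (ltn_ord i)).
rewrite /= eqxx addrC subrK //.
Qed.

Lemma span_ff N (g : {poly rat}) : (size g <= N)%N ->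
  exists c : nat -> rat, g = \sum_(m < N) c m *: ff m.
Proof.
elim: N g => [|N IH] g hg.
  by exists (fun _ => 0); rewrite big_ord0; apply/eqP; rewrite -size_poly_eq0 -leqn0.
have hg' : (size (g - g`_N *: ff N)%R <= N)%N.
  apply/leq_sizeP => j hj.
  rewrite coefB coefZ; case: (ltngtP j N) => [|hjN|->]; first by rewrite ltnNge hj.
    have hf : (size (ff N) <= j)%N by rewrite size_ff.
    by rewrite (nth_default _ (leq_trans hg hjN)) (nth_default _ hf) mulr0 subr0.
  by rewrite ff_lead mulr1 subrr.
have [c hc] := IH _ hg'.
exists (fun m => if m == N then g`_N else c m).
rewrite big_ord_recr /= eqxx -[LHS](subrK (g`_N *: ff N)) hc; congr (_ + _).
by apply: eq_bigr => i _; rewrite ifN // neq_ltn ltn_ord.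
Qed.

Definition Mj (x : rat) (j : nat) : rat :=
  if j is k.+1 then Rf 1 1 k.+1 * x ^+ k.+1 + k.+1%:R * (Rf 1 1 k * x ^+ k) else 1.

Lemma scal (lam x : rat) m :
  Rf 1 lam m.+1 * x ^+ m.+1 + m%:R * (Rf 1 lam m * x ^+ m) =
  lam * x * \sum_(j < m.+1) 'C(m, j)%:R * (Mj x j * (Rf 1 lam (m - j) * x ^+ (m - j))).
Proof.
set r := Rf 1 lam m.
set T := \sum_(k < m) 'C(m, k.+1)%:R * (Rf 1 1 k.+1 * Rf 1 lam (m - k.+1)).
have hV : Rf 1 (1 + lam) m = r + T.
  by rewrite Rf_vdm big_ord_recl /= bin0 Rf0 subn0 !mul1r.
have hT : lam * T = m%:R * r.
  have h1 : Rf 1 lam m.+1 = lam * (r + T) by rewrite RfSl -hV addrC.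
  have h2 : Rf 1 lam m.+1 = r * (lam + 1 *+ m) by rewrite RfSr.
  have : lam * (r + T) = r * (lam + 1 *+ m) by rewrite -h1 -h2.
  move=> h; rewrite -mulr_natl; apply: (@addrI _ (lam * r)).
  rewrite -mulrDr h; ring.
rewrite big_ord_recl.
have hS : x * \sum_(i < m) 'C(m, bump 0 i)%:R *
          (Mj x (bump 0 i) * (Rf 1 lam (m - bump 0 i) * x ^+ (m - bump 0 i)))
        = (x ^+ m.+1 + x ^+ m) * T.
  rewrite /T mulr_sumr mulr_sumr; apply: eq_bigr => k _.
  rewrite /bump /= add1n.
  have hk : (k.+1 <= m)%N by apply: ltn_ord.
  have hx : x ^+ k.+1 * x ^+ (m - k.+1) = x ^+ m by rewrite -exprD subnKC.
  have hx' : x ^+ k * x ^+ (m - k.+1) = x ^+ m.-1.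
    by rewrite -exprD; congr (_ ^+ _); lia.
  have hR : Rf (1:rat) 1 k.+1 = Rf 1 1 k * (1 + 1 *+ k) by rewrite RfSr.
  have hm : x ^+ m = x * x ^+ m.-1 by rewrite -exprS prednK // (leq_ltn_trans _ hk).
  rewrite hR.
  transitivity ('C(m, k.+1)%:R * Rf 1 1 k * Rf 1 lam (m - k.+1) * (1 + k%:R) *
     (x * ((x ^+ k.+1 * x ^+ (m - k.+1)) + (x ^+ k * x ^+ (m - k.+1))))).
    rewrite !add0n -[k.+1]addn1 natrD exprD expr1; ring.
  rewrite hx hx' [x * (_ + _)]mulrDr -hm -exprS; ring.
rewrite [RHS]mulrDr -[X in _ = _ + X]mulrA hS /= bin0 subn0 mul1r.
have -> : Rf 1 lam m.+1 = r * (lam + 1 *+ m) by rewrite RfSr.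
transitivity (r * lam * x * x ^+ m + x ^+ m.+1 * (m%:R * r) + x ^+ m * (m%:R * r)).
  rewrite exprS -mulr_natl; ring.
rewrite -hT exprS -/r; ring.
Qed.

Lemma LfD l (p q : {poly rat}) : Lf l (p + q) = Lf l p + Lf l q.
Proof. exact: (raddfD (Lf l)). Qed.
Lemma Lf_sum l I (r : seq I) (F : I -> {poly rat}) :
  Lf l (\sum_(i <- r) F i) = \sum_(i <- r) Lf l (F i).
Proof. exact: (raddf_sum (Lf l)). Qed.
Lemma DL_sum l1 l I (r : seq I) (F : I -> {poly {poly rat}}) :
  DL l1 l (\sum_(i <- r) F i) = \sum_(i <- r) DL l1 l (F i).
Proof. exact: (raddf_sum (DL l1 l)). Qed.
Lemma DLMn l1 l (h : {poly {poly rat}}) n : DL l1 l (h *+ n) = DL l1 l h *+ n.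
Proof. exact: (raddfMn (DL l1 l)). Qed.

Definition W : {poly {poly rat}} := 'X + ('X + 1)%:P.
Definition ev := horner_eval W \o map_poly (polyC : {poly rat} -> {poly {poly rat}})
                 \o map_poly (polyC : rat -> {poly rat}).

Lemma ev_Rf al a n : ev (Rf al a n) = Rf (ev al) (ev a) n.
Proof. exact: (rmorph_Rf ev). Qed.
Lemma polyC_Rf (al a : rat) n : (Rf al a n)%:P = Rf al%:P a%:P n.
Proof. exact: (rmorph_Rf polyC). Qed.
Lemma polyC_Rf2 (al a : {poly rat}) n : (Rf al a n)%:P = Rf al%:P a%:P n.
Proof. exact: (rmorph_Rf polyC). Qed.
Lemma mapC_Rf (al a : {poly rat}) n :
  map_poly polyC (Rf al a n) = Rf (map_poly polyC al) (map_poly polyC a) n.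
Proof. exact: (rmorph_Rf (map_poly polyC)). Qed.

Lemma evN1 : ev (-1) = -1.
Proof. exact: rmorphN1. Qed.
Lemma mapCN1 : map_poly polyC (-1 : {poly rat}) = -1.
Proof. exact: rmorphN1. Qed.
Lemma mapCX1 : map_poly polyC ('X + 1 : {poly rat}) = 'X + 1.
Proof. by rewrite map_polyXaddC. Qed.

Lemma ev_sum I (r : seq I) (F : I -> {poly rat}) :
  ev (\sum_(i <- r) F i) = \sum_(i <- r) ev (F i).
Proof. exact: (rmorph_sum ev). Qed.
Lemma evM (p q : {poly rat}) : ev (p * q) = ev p * ev q.
Proof. exact: (rmorphM ev). Qed.

Lemma evX : ev 'X = W.
Proof. by rewrite /ev /= !map_polyX /horner_eval hornerX. Qed.

Lemma evC c : ev c%:P = c%:P%:P.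
Proof. by rewrite /ev /= !map_polyC /horner_eval hornerC. Qed.

Lemma DLE l1 l (h : {poly {poly rat}}) : DL l1 l h = \sum_(i < size h) Lf l h`_i * l1 i.
Proof. by []. Qed.

Lemma DL_bound l1 l (h : {poly {poly rat}}) N : (size h <= N)%N ->
  DL l1 l h = \sum_(i < N) Lf l h`_i * l1 i.
Proof. exact: LL_bound. Qed.

Lemma DLCM l1 l c (h : {poly {poly rat}}) : DL l1 l (c%:P%:P * h) = c * DL l1 l h.
Proof.
rewrite (@DL_bound _ _ _ (size h)); last by rewrite mul_polyC size_scale_leq.
rewrite DLE mulr_sumr; apply: eq_bigr => i _.
by rewrite coefCM LfCM mulrA.
Qed.

Lemma DL_sep l1 l (p q : {poly rat}) :
  DL l1 l (map_poly polyC p * q%:P) = Lf l1 p * Lf l q.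
Proof.
rewrite (@DL_bound _ _ _ (size p)); last first.
  apply: leq_trans (size_polyMleq _ _) _.
  rewrite size_map_polyC; by rewrite -subn1 leq_subLR addnC leq_add2r size_polyC_leq1.
rewrite [Lf l1 p]LfE mulr_suml; apply: eq_bigr => i _.
rewrite coefMC coef_map /= LfCM; ring.
Qed.

Lemma Xff m : 'X * ff m = ff m.+1 + m%:R *: ff m.
Proof. rewrite /ff RfSr scaler_nat; ring. Qed.

Lemma ffS1 k : Rf (-1) ('X + 1) k.+1 = ff k.+1 + k.+1%:R *: ff k.
Proof.
rewrite RfSl addrK -/(ff k) mulrDl mul1r Xff -addrA; congr (_ + _).
by rewrite -[k.+1]addn1 natrD scalerDl scale1r.
Qed.

Section Key.
Variables (l1 l : nat -> rat) (lam x : rat).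
Hypothesis hl : forall m, Lf l (ff m) = Rf 1 lam m * x ^+ m.
Hypothesis hl1 : forall m, Lf l1 (ff m) = Rf 1 1 m * x ^+ m.

Lemma Lf1_shift j : Lf l1 (Rf (-1) ('X + 1) j) = Mj x j.
Proof.
case: j => [|k]; first by rewrite Rf0 -(Rf0 (-1) 'X) -/(ff 0) hl1 Rf0 expr0 mulr1.
by rewrite ffS1 LfD LfZ !hl1.
Qed.

Lemma key_ff m : Lf l ('X * ff m) = lam * x * DL l1 l (ev (ff m)).
Proof.
rewrite Xff LfD LfZ !hl scal; congr (_ * _).
rewrite /ff ev_Rf evN1 evX.
have -> : W = ('X + 1) + ('X : {poly rat})%:P by rewrite /W polyCD polyC1; ring.
rewrite Rf_vdm DL_sum; apply: eq_bigr => j _.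
have -> : Rf (-1) ('X + 1 : {poly {poly rat}}) j = map_poly polyC (Rf (-1) ('X + 1) j).
  by rewrite mapC_Rf mapCN1 mapCX1.
have -> : Rf (-1) (('X : {poly rat})%:P) (m - j) = (ff (m - j))%:P.
  by rewrite /ff polyC_Rf2 polyCN polyC1.
by rewrite [in RHS]mulr_natl DLMn DL_sep Lf1_shift hl mulr_natl.
Qed.

Lemma key (g : {poly rat}) : Lf l ('X * g) = lam * x * DL l1 l (ev g).
Proof.
have [c ->] := span_ff (leqnn (size g)).
rewrite mulr_sumr Lf_sum ev_sum DL_sum mulr_sumr; apply: eq_bigr => m _.
rewrite -scalerAr LfZ key_ff -mul_polyC evM evC DLCM; ring.
Qed.
End Key.

Lemma Rf_neg (T : comPzRingType) (al a : T) n : Rf (-al) (-a) n = (-1) ^+ n * Rf al a n.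
Proof.
elim: n => [|n IH]; first by rewrite !Rf0 expr0 mul1r.
rewrite !RfSr IH exprS mulNrn; ring.
Qed.

Lemma Rf_scale (T : comPzRingType) (c al a : T) n : Rf (c * al) (c * a) n = c ^+ n * Rf al a n.
Proof.
elim: n => [|n IH]; first by rewrite !Rf0 expr0 mul1r.
rewrite !RfSr IH exprS; ring.
Qed.

Lemma Rf_nat (lam k : nat) : Rf (1 : rat) lam%:R k = (\prod_(i < k) (lam + i))%:R.
Proof. by rewrite natr_prod /Rf; apply: eq_bigr => i _; rewrite natrD. Qed.

Lemma rbinE lam k : (rbin lam k * k`!)%N = \prod_(i < k) (lam + i).
Proof.
rewrite /rbin; case: lam => [|l].
  case: k => [|k]; first by rewrite big_ord0 fact0.
  by rewrite big_ord_recl /= add0n mul0n div0n mul0n.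
have -> : \prod_(i < k) (l.+1 + i) = (l + k) ^_ k.
  elim: k => [|k IH]; first by rewrite big_ord0 ffactn0.
  rewrite big_ord_recr /= IH addnS ffactSS mulnC.
  exact: (congr1 (muln ((l + k) ^_ k)) (addSn l k)).
by rewrite -bin_ffact mulnK ?fact_gt0.
Qed.

Definition Pp (al be n c : nat) : {poly rat} :=
  Rf (al%:R%:P) (be%:R%:P * 'X + (c%:R)%:P) n.
Definition wpt (be ga : nat) : {poly rat} := - (be%:R%:P * 'X + (ga%:R)%:P).
Definition phi (be ga : nat) := horner_eval (wpt be ga)
  \o map_poly ((polyC : rat -> {poly rat}) \o (intr : int -> rat)).

Section Phi.
Variables be ga : nat.
Lemma phi_prod n (F : 'I_n -> {poly int}) :
  phi be ga (\prod_(j < n) F j) = \prod_(j < n) phi be ga (F j).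
Proof. exact: rmorph_prod. Qed.
Lemma phi_sum n (F : 'I_n -> {poly int}) :
  phi be ga (\sum_(j < n) F j) = \sum_(j < n) phi be ga (F j).
Proof. exact: rmorph_sum. Qed.
Lemma phiM p q : phi be ga (p * q) = phi be ga p * phi be ga q.
Proof. exact: rmorphM. Qed.
Lemma phiC c : phi be ga c%:P = (c%:~R)%:P.
Proof. by rewrite /phi /= map_polyC /horner_eval hornerC. Qed.
Lemma phiXsubC c : phi be ga ('X - c%:P) = wpt be ga - (c%:~R)%:P.
Proof. by rewrite /phi /= map_polyXsubC /horner_eval hornerXsubC. Qed.
Lemma phi_prodX n (F : 'I_n -> int) :
  phi be ga (\prod_(j < n) ('X - (F j)%:P)) = \prod_(j < n) (wpt be ga - ((F j)%:~R)%:P).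
Proof. by rewrite phi_prod; apply: eq_bigr => j _; rewrite phiXsubC. Qed.
End Phi.

Lemma intr_sumo n (F : 'I_n -> int) :
  ((\sum_(k < n) F k)%:~R : rat) = \sum_(k < n) (F k)%:~R.
Proof. exact: (rmorph_sum (intmul (1 : rat))). Qed.

Lemma bridge S (HS : is_gen_stirling S) (l : nat -> rat) (lam x n al be ga : nat) :
  (forall m, Lf l (ff m) = Rf 1 lam%:R m * x%:R ^+ m) ->
  (Apoly S lam x n al be ga)%:~R = Lf l (Pp al be n ga).
Proof.
move=> hl.
have := congr1 (phi be ga) (HS n al%:R (- be%:R) (- ga%:R)).
rewrite /gfact /gfact_shift phi_prodX phi_sum.
under [in RHS]eq_bigr => k _ do rewrite -mul_polyC phiM phiC phi_prodX.
have hL : \prod_(j < n) (wpt be ga - ((al%:R *+ j : int)%:~R)%:P)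
          = ((-1) ^+ n)%:P * Pp al be n ga.
  rewrite polyC_exp polyCN polyC1 -Rf_neg /Pp /Rf; apply: eq_bigr => j _.
  rewrite rmorphMn rmorph_nat polyCMn /wpt; ring.
have hR : forall k : nat, \prod_(j < k) (wpt be ga - ((- ga%:R + - be%:R *+ j : int)%:~R)%:P)
          = ((- be%:R) ^+ k)%:P * ff k.
  move=> k; rewrite polyC_exp /ff -Rf_scale /Rf; apply: eq_bigr => j _.
  rewrite rmorphD !rmorphN rmorphMn !rmorph_nat polyCD !polyCN polyCMn /wpt.
  rewrite -!polyC_natr; ring.
rewrite hL; under [in RHS]eq_bigr => k _ do rewrite hR mulrA -polyCM.
move/(congr1 (Lf l)); rewrite LfCM Lf_sum.
under [in RHS]eq_bigr => k _ do rewrite LfCM hl.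
move=> E.
have -> : Lf l (Pp al be n ga) = (-1) ^+ n * ((-1) ^+ n * Lf l (Pp al be n ga)).
  by rewrite mulrA -exprMn mulrNN mulr1 expr1n mul1r.
rewrite E mulr_sumr /Apoly intr_sumo; apply: eq_bigr => k _.
rewrite !intrM intr_sign -[(be%:R : int) ^+ k]natrX -[(x%:R : int) ^+ k]natrX !mulrz_nat !natrX.
rewrite Rf_nat -rbinE natrM exprD [(- (be%:R : rat)) ^+ k]exprNn.
ring.
Qed.

Lemma evD (p q : {poly rat}) : ev (p + q) = ev p + ev q.
Proof. exact: (rmorphD ev). Qed.
Lemma mapCD (p q : {poly rat}) : map_poly polyC (p + q) = map_poly polyC p + map_poly polyC q.
Proof. exact: (rmorphD (map_poly polyC)). Qed.
Lemma mapCM (p q : {poly rat}) : map_poly polyC (p * q) = map_poly polyC p * map_poly polyC q.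
Proof. exact: (rmorphM (map_poly polyC)). Qed.

Lemma evPp al be n c :
  ev (Pp al be n c) = \sum_(k < n.+1) 'C(n, k)%:R *
     (map_poly polyC (Pp al be k (c + be)) * (Pp al be (n - k) 0)%:P).
Proof.
rewrite /Pp ev_Rf evD evM !evC evX.
have -> : (be%:R%:P%:P * W + c%:R%:P%:P : {poly {poly rat}}) =
   (be%:R%:P%:P * 'X + (c + be)%:R%:P%:P) + be%:R%:P%:P * ('X : {poly rat})%:P.
  by rewrite /W natrD !polyCD polyC1; ring.
rewrite Rf_vdm; apply: eq_bigr => k _; congr (_ * (_ * _)).
  by rewrite mapC_Rf !map_polyC mapCD mapCM map_polyX !map_polyC.
by rewrite polyC_Rf2 polyCD polyCM /= addr0.
Qed.

Unset Implicit Arguments.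

Theorem theorem4 (S : nat -> nat -> int -> int -> int -> int)
    (HS : is_gen_stirling S)
    (alpha beta gamma x lam n : nat)
    (Hnz : (alpha, beta, gamma, x) <> (0%N, 0%N, 0%N, 0%N)) :
  Apoly S lam x n.+1 alpha beta gamma =
    gamma%:R * Apoly S lam x n alpha beta (gamma + alpha)
    + x%:R * lam%:R * beta%:R *
      \sum_(k < n.+1) ('C(n, k))%:R
         * Apoly S 1 x k alpha beta (gamma + beta + alpha)
         * Apoly S lam x (n - k) alpha beta 0.
Proof.
have [l hl] := moments (fun m => Rf 1 lam%:R m * x%:R ^+ m).
have [l1 hl1] := moments (fun m => Rf 1 1 m * x%:R ^+ m).
have hl1' : forall m, Lf l1 (ff m) = Rf 1 (1%N)%:R m * x%:R ^+ m by [].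
have inj : forall a b : int, (a%:~R : rat) = b%:~R -> a = b.
  by move=> a b h; apply/eqP; rewrite -subr_eq0 -(intr_eq0 rat) intrB h subrr.
apply: inj.
rewrite intrD (intrM _ (gamma%:R : int)) !(bridge HS _ _ _ _ hl).
rewrite intrM intr_sumo !intrM !mulrz_nat.
under eq_bigr => k _ do rewrite !intrM mulrz_nat (bridge HS _ _ _ _ hl1') (bridge HS _ _ _ _ hl).
rewrite {1}/Pp RfSl.
have -> : (beta%:R%:P * 'X + (gamma%:R)%:P + alpha%:R%:P : {poly rat}) =
    beta%:R%:P * 'X + ((gamma + alpha)%:R)%:P by rewrite natrD polyCD; ring.
rewrite -/(Pp alpha beta n (gamma + alpha)) mulrDl -[_ * 'X * _]mulrA LfD !LfCM.
rewrite (key hl hl1) evPp DL_sum.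
rewrite addrC; congr (_ + _); rewrite !mulr_sumr; apply: eq_bigr => k _.
rewrite mulr_natl DLMn DL_sep -mulr_natl addnAC; ring.
Qed.
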